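(* Consider the upper half-space model $\mathbb{H}^3=\{(x_1,x_2,x_3)\in\mathbb{R}^3: x_3>0\}$ with metric $g=\frac{1}{x_3^2}(dx_1^2+dx_2^2+dx_3^2)$. Let $E$ be a complete, non-parabolic end of revolution in $\mathbb{H}^3$ about the $x_3$-axis. Then $\inf_{p\in E}x_3(p)=0$.
   Context: A complete end of revolution about the $x_3$-axis is the set $E=\{(\gamma_1(s)\cos\theta,\gamma_1(s)\sin\theta,\gamma_2(s)): s\ge0,\ \theta\in[0,2\pi)\}$, where $\gamma(s)=(\gamma_1(s),0,\gamma_2(s))$, $s\in[0,\infty)$, is a smooth regular curve with $\gamma_1>0$, $\gamma_2>0$ and infinite hyperbolic length; $E$ carries the induced metric. An end $E$ is parabolic if every bounded harmonic function on $E$ is determined by its boundary values; otherwise it is non-parabolic. *)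

(* Defs.v *)
From Stdlib Require Import Reals.
From Coquelicot Require Import Coquelicot.
Open Scope R_scope.

Definition pd1 (f : R -> R -> R) (s t : R) : R := Derive (fun x => f x t) s.
Definition pd2 (f : R -> R -> R) (s t : R) : R := Derive (fun y => f s y) t.

Definition smooth (f : R -> R) : Prop := forall n x, ex_derive_n f n x.

Definition pt3 := (R * R * R)%type.
Definition x3 (p : pt3) : R := let '(_, _, c) := p in c.

(* Parametrization of the end of revolution generated by
   gamma = (g1, 0, g2):  X(s,theta) = (g1 s cos theta, g1 s sin theta, g2 s). *)
Definition Xrev (g1 g2 : R -> R) (s th : R) : pt3 :=
  (g1 s * cos th, g1 s * sin th, g2 s).

Definition hypmetric (p v w : pt3) : R :=
  let '(v1, v2, v3) := v in let '(w1, w2, w3) := w in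
  (v1 * w1 + v2 * w2 + v3 * w3) / (x3 p ^ 2).

Definition Xs (g1 g2 : R -> R) (s th : R) : pt3 :=
  (pd1 (fun a b => g1 a * cos b) s th,
   pd1 (fun a b => g1 a * sin b) s th,
   pd1 (fun a b => g2 a) s th).
Definition Xth (g1 g2 : R -> R) (s th : R) : pt3 :=
  (pd2 (fun a b => g1 a * cos b) s th,
   pd2 (fun a b => g1 a * sin b) s th,
   pd2 (fun a b => g2 a) s th).

Definition gss g1 g2 s th := hypmetric (Xrev g1 g2 s th) (Xs g1 g2 s th) (Xs g1 g2 s th).
Definition gst g1 g2 s th := hypmetric (Xrev g1 g2 s th) (Xs g1 g2 s th) (Xth g1 g2 s th).
Definition gtt g1 g2 s th := hypmetric (Xrev g1 g2 s th) (Xth g1 g2 s th) (Xth g1 g2 s th).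
Definition gdet g1 g2 s th := gss g1 g2 s th * gtt g1 g2 s th - gst g1 g2 s th ^ 2.

(* Laplace-Beltrami operator of the induced metric:
   Delta u = |g|^{-1/2} d_i ( |g|^{1/2} g^{ij} d_j u ). *)
Definition LapBel (g1 g2 : R -> R) (u : R -> R -> R) (s th : R) : R :=
  / sqrt (gdet g1 g2 s th) *
  ( pd1 (fun a b => sqrt (gdet g1 g2 a b) *
           ((gtt g1 g2 a b / gdet g1 g2 a b) * pd1 u a b
            - (gst g1 g2 a b / gdet g1 g2 a b) * pd2 u a b)) s th
  + pd2 (fun a b => sqrt (gdet g1 g2 a b) *
           (- (gst g1 g2 a b / gdet g1 g2 a b) * pd1 u a b
            + (gss g1 g2 a b / gdet g1 g2 a b) * pd2 u a b)) s th ).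

Definition cont2 (f : R -> R -> R) (s t : R) : Prop :=
  continuous (fun p : R * R => f (fst p) (snd p)) (s, t).

(* u is C^2 at (s,t) (with the assumption holding on an open set). *)
Definition C2_at (u : R -> R -> R) (s t : R) : Prop :=
  ex_derive (fun x => u x t) s /\ ex_derive (fun y => u s y) t /\
  ex_derive (fun x => pd1 u x t) s /\ ex_derive (fun y => pd1 u s y) t /\
  ex_derive (fun x => pd2 u x t) s /\ ex_derive (fun y => pd2 u s y) t /\
  cont2 u s t /\ cont2 (pd1 u) s t /\ cont2 (pd2 u) s t /\
  cont2 (pd1 (pd1 u)) s t /\ cont2 (pd2 (pd1 u)) s t /\
  cont2 (pd1 (pd2 u)) s t /\ cont2 (pd2 (pd2 u)) s t.

(* A function on E, in coordinates (s,theta), s >= 0, 2pi-periodic in theta. *)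
Definition bdd_harmonic_on_end (g1 g2 : R -> R) (u : R -> R -> R) : Prop :=
  (forall s th, 0 <= s -> u s (th + 2 * PI) = u s th) /\
  (exists M, forall s th, 0 <= s -> Rabs (u s th) <= M) /\
  (forall s th, 0 <= s ->
     filterlim (fun p : R * R => u (fst p) (snd p))
       (within (fun p : R * R => 0 <= fst p) (locally (s, th)))
       (locally (u s th))) /\
  (forall s th, 0 < s -> C2_at u s th /\ LapBel g1 g2 u s th = 0).

Definition parabolic_end (g1 g2 : R -> R) : Prop :=
  forall u v, bdd_harmonic_on_end g1 g2 u -> bdd_harmonic_on_end g1 g2 v ->
    (forall th, u 0 th = v 0 th) ->
    forall s th, 0 <= s -> u s th = v s th.

Definition complete_end_of_revolution (g1 g2 : R -> R) : Prop :=
  smooth g1 /\ smooth g2 /\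
  (forall s, 0 <= s -> (Derive g1 s) ^ 2 + (Derive g2 s) ^ 2 > 0) /\
  (forall s, 0 <= s -> 0 < g1 s) /\
  (forall s, 0 <= s -> 0 < g2 s) /\
  (* infinite hyperbolic length *)
  (forall M : R, exists T, 0 <= T /\
     M < RInt (fun s => sqrt ((Derive g1 s) ^ 2 + (Derive g2 s) ^ 2) / g2 s) 0 T).

Definition end_set (g1 g2 : R -> R) (p : pt3) : Prop :=
  exists s th, 0 <= s /\ 0 <= th < 2 * PI /\ p = Xrev g1 g2 s th.

(* Main.v *)
Require Import Defs.
From Stdlib Require Import Reals Lra.
From Coquelicot Require Import Coquelicot.
Open Scope R_scope.

Lemma smooth_d (f : R -> R) : smooth f -> forall x, ex_derive f x.
Proof. intros H x. exact (H 1%nat x). Qed.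
Lemma smooth_dd (f : R -> R) : smooth f -> forall x, ex_derive (Derive f) x.
Proof. intros H x. exact (H 2%nat x). Qed.
Lemma smooth_c (f : R -> R) : smooth f -> forall x, continuous f x.
Proof. intros H x. exact (ex_derive_continuous f x (smooth_d f H x)). Qed.
Lemma smooth_dc (f : R -> R) : smooth f -> forall x, continuous (Derive f) x.
Proof. intros H x. exact (ex_derive_continuous (Derive f) x (smooth_dd f H x)). Qed.

Lemma Xs_eq g1 g2 s th : Xs g1 g2 s th = (Derive g1 s * cos th, Derive g1 s * sin th, Derive g2 s).
Proof.
  unfold Xs, pd1. rewrite (Derive_scal_l g1), (Derive_scal_l g1). reflexivity.
Qed.
Lemma Xth_eq g1 g2 s th : Xth g1 g2 s th = (- g1 s * sin th, g1 s * cos th, 0).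
Proof.
  unfold Xth, pd2. rewrite (Derive_scal cos), (Derive_scal sin), Derive_const.
  rewrite (is_derive_unique _ _ _ (is_derive_cos th)).
  rewrite (is_derive_unique _ _ _ (is_derive_sin th)). f_equal. f_equal. ring.
Qed.

Definition NN g1 g2 s := Derive g1 s ^ 2 + Derive g2 s ^ 2.

Lemma gst_eq g1 g2 s th : gst g1 g2 s th = 0.
Proof. unfold gst. rewrite Xs_eq, Xth_eq. simpl. unfold Rdiv. ring. Qed.
Lemma sc1 th : sin th ^ 2 + cos th ^ 2 = 1.
Proof. rewrite <- (sin2_cos2 th). unfold Rsqr. ring. Qed.
Lemma gss_eq g1 g2 s th : gss g1 g2 s th = NN g1 g2 s / g2 s ^ 2.
Proof. unfold gss, NN. rewrite Xs_eq. simpl. unfold Rdiv. f_equal.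
  transitivity (Derive g1 s ^2 * (sin th ^2 + cos th ^2) + Derive g2 s ^ 2). ring.
  rewrite sc1. ring. Qed.
Lemma gtt_eq g1 g2 s th : gtt g1 g2 s th = g1 s ^ 2 / g2 s ^ 2.
Proof. unfold gtt. rewrite Xth_eq. simpl. unfold Rdiv. f_equal.
  transitivity (g1 s ^2 * (sin th ^2 + cos th ^2)). ring.
  rewrite sc1. ring. Qed.

Definition PP g1 g2 s := g1 s / sqrt (NN g1 g2 s).
Definition QQ g1 g2 s := sqrt (NN g1 g2 s) / g1 s.

Section Met.
Variables (g1 g2 : R -> R) (s th : R).
Hypotheses (H1 : 0 < g1 s) (H2 : 0 < g2 s) (HN : 0 < NN g1 g2 s).

Lemma sqrt_gdet : sqrt (gdet g1 g2 s th) = sqrt (NN g1 g2 s) * g1 s / g2 s ^ 2.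
Proof.
  assert (HS : 0 < sqrt (NN g1 g2 s)) by (apply sqrt_lt_R0; lra).
  assert (E : gdet g1 g2 s th = (sqrt (NN g1 g2 s) * g1 s / g2 s ^ 2) ^ 2).
  { unfold gdet. rewrite gss_eq, gtt_eq, gst_eq.
    replace ((sqrt (NN g1 g2 s) * g1 s / g2 s ^ 2) ^ 2) with
      ((sqrt (NN g1 g2 s) * sqrt (NN g1 g2 s)) * g1 s ^2 / g2 s ^ 4)
      by (field; lra).
    rewrite sqrt_sqrt by lra. field. lra. }
  rewrite E. apply sqrt_pow2.
  apply Rmult_le_pos; [apply Rmult_le_pos; lra|].
  apply Rlt_le, Rinv_0_lt_compat, pow_lt; lra.
Qed.

Lemma gdet_pos : 0 < gdet g1 g2 s th.
Proof. unfold gdet. rewrite gss_eq, gtt_eq, gst_eq.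
  replace (NN g1 g2 s / g2 s ^ 2 * (g1 s ^ 2 / g2 s ^ 2) - 0 ^ 2) with
    (NN g1 g2 s * g1 s ^ 2 / g2 s ^ 4) by (field; lra).
  apply Rdiv_lt_0_compat. apply Rmult_lt_0_compat. lra. apply pow_lt; lra.
  apply pow_lt; lra. Qed.

Lemma sqrt_gdet_nz : sqrt (gdet g1 g2 s th) <> 0.
Proof. apply Rgt_not_eq, sqrt_lt_R0, gdet_pos. Qed.

Lemma flux1_eq x y : sqrt (gdet g1 g2 s th) *
   (gtt g1 g2 s th / gdet g1 g2 s th * x - gst g1 g2 s th / gdet g1 g2 s th * y)
   = PP g1 g2 s * x.
Proof.
  assert (HS : 0 < sqrt (NN g1 g2 s)) by (apply sqrt_lt_R0; lra).
  rewrite sqrt_gdet. unfold gdet. rewrite gss_eq, gtt_eq, gst_eq. unfold PP.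
  assert (E : NN g1 g2 s = sqrt (NN g1 g2 s) * sqrt (NN g1 g2 s)) by (rewrite sqrt_sqrt; lra).
  set (r := sqrt (NN g1 g2 s)) in *. rewrite E.
  field. repeat split; try lra.
Qed.

Lemma flux2_eq x y : sqrt (gdet g1 g2 s th) *
   (- (gst g1 g2 s th / gdet g1 g2 s th) * x + gss g1 g2 s th / gdet g1 g2 s th * y)
   = QQ g1 g2 s * y.
Proof.
  assert (HS : 0 < sqrt (NN g1 g2 s)) by (apply sqrt_lt_R0; lra).
  rewrite sqrt_gdet. unfold gdet. rewrite gss_eq, gtt_eq, gst_eq. unfold QQ.
  assert (E : NN g1 g2 s = sqrt (NN g1 g2 s) * sqrt (NN g1 g2 s)) by (rewrite sqrt_sqrt; lra).
  set (r := sqrt (NN g1 g2 s)) in *. rewrite E.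
  field. repeat split; try lra.
Qed.
End Met.

Lemma loc_pos (s : R) : 0 < s -> locally s (fun t => 0 < t).
Proof. intro Hs. apply (open_gt 0 s Hs). Qed.

Lemma PP_der g1 g2 s : smooth g1 -> smooth g2 -> 0 < NN g1 g2 s -> ex_derive (PP g1 g2) s.
Proof.
  intros S1 S2 HN. unfold PP, NN in *.
  auto_derive. assert (HN' : 0 < Derive g1 s * (Derive g1 s * 1) + Derive g2 s * (Derive g2 s * 1)) by (simpl in HN; lra).
  repeat split; auto.
  apply (smooth_d g1 S1). apply (smooth_dd g1 S1). apply (smooth_dd g2 S2).
  apply Rgt_not_eq, sqrt_lt_R0; lra.
Qed.

Lemma pde g1 g2 u s th : complete_end_of_revolution g1 g2 ->
  bdd_harmonic_on_end g1 g2 u -> 0 < s ->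
  Derive (PP g1 g2) s * pd1 u s th + PP g1 g2 s * pd1 (pd1 u) s th
  + QQ g1 g2 s * pd2 (pd2 u) s th = 0.
Proof.
  intros [S1 [S2 [HN [Hg1 [Hg2 _]]]]] [_ [_ [_ Hh]]] Hs.
  destruct (Hh s th Hs) as [HC HL].
  destruct HC as [_ [_ [D3 [_ [_ [D6 _]]]]]].
  unfold LapBel in HL.
  assert (Hs0 : 0 <= s) by lra.
  assert (E1 : pd1 (fun a b => sqrt (gdet g1 g2 a b) *
           ((gtt g1 g2 a b / gdet g1 g2 a b) * pd1 u a b
            - (gst g1 g2 a b / gdet g1 g2 a b) * pd2 u a b)) s th
         = Derive (PP g1 g2) s * pd1 u s th + PP g1 g2 s * pd1 (pd1 u) s th).
  { unfold pd1 at 1.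
    rewrite (Derive_ext_loc _ (fun a => PP g1 g2 a * pd1 u a th)).
    - rewrite Derive_mult. reflexivity. apply PP_der; auto. apply HN; lra. exact D3.
    - apply (filter_imp (fun t => 0 < t)); [|apply loc_pos, Hs].
      intros t Ht. apply flux1_eq; [apply Hg1|apply Hg2|apply HN]; lra. }
  assert (E2 : pd2 (fun a b => sqrt (gdet g1 g2 a b) *
           (- (gst g1 g2 a b / gdet g1 g2 a b) * pd1 u a b
            + (gss g1 g2 a b / gdet g1 g2 a b) * pd2 u a b)) s th
         = QQ g1 g2 s * pd2 (pd2 u) s th).
  { unfold pd2 at 1.
    rewrite (Derive_ext _ (fun b => QQ g1 g2 s * pd2 u s b)).
    - rewrite Derive_scal. reflexivity.
    - intro t. apply flux2_eq; [apply Hg1|apply Hg2|apply HN]; lra. }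
  rewrite E1, E2 in HL.
  apply Rmult_integral in HL. destruct HL as [HL|HL]; [|rewrite <- HL; ring].
  exfalso. revert HL. apply Rinv_neq_0_compat, sqrt_gdet_nz; [apply Hg1|apply Hg2|apply HN]; lra.
Qed.


Lemma cont_slice (f : R -> R -> R) x y : cont2 f x y -> continuous (fun t => f x t) y.
Proof.
  intro H. apply (continuous_comp_2 (fun _ => x) (fun t => t) f).
  apply continuous_const. apply continuous_id. exact H.
Qed.

Lemma cont2_2d f x y : cont2 f x y -> continuity_2d_pt f x y.
Proof. intro H. apply continuity_2d_pt_filterlim. exact H. Qed.
Lemma cont2_of_2d f x y : continuity_2d_pt f x y -> cont2 f x y.
Proof. intro H. apply continuity_2d_pt_filterlim. exact H. Qed.

Definition ww (u v : R -> R -> R) a b := u a b - v a b.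
Definition ws (u v : R -> R -> R) a b := pd1 u a b - pd1 v a b.
Definition wt (u v : R -> R -> R) a b := pd2 u a b - pd2 v a b.
Definition wss (u v : R -> R -> R) a b := pd1 (pd1 u) a b - pd1 (pd1 v) a b.
Definition wtt (u v : R -> R -> R) a b := pd2 (pd2 u) a b - pd2 (pd2 v) a b.

Section W.
Variables (g1 g2 : R -> R) (u v : R -> R -> R).
Hypothesis HE : complete_end_of_revolution g1 g2.
Hypothesis Hu : bdd_harmonic_on_end g1 g2 u.
Hypothesis Hv : bdd_harmonic_on_end g1 g2 v.

Lemma C2u s t : 0 < s -> C2_at u s t.
Proof. intro Hs. destruct Hu as [_ [_ [_ H]]]. apply H; auto. Qed.
Lemma C2v s t : 0 < s -> C2_at v s t.
Proof. intro Hs. destruct Hv as [_ [_ [_ H]]]. apply H; auto. Qed.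

Lemma d_w_s s t : 0 < s -> is_derive (fun x => ww u v x t) s (ws u v s t).
Proof. intro Hs. destruct (C2u s t Hs) as [A _]. destruct (C2v s t Hs) as [B _].
  apply (is_derive_minus (fun x => u x t) (fun x => v x t)); apply Derive_correct; auto. Qed.
Lemma d_w_t s t : 0 < s -> is_derive (fun y => ww u v s y) t (wt u v s t).
Proof. intro Hs. destruct (C2u s t Hs) as [_ [A _]]. destruct (C2v s t Hs) as [_ [B _]].
  apply (is_derive_minus (fun y => u s y) (fun y => v s y)); apply Derive_correct; auto. Qed.
Lemma d_ws_s s t : 0 < s -> is_derive (fun x => ws u v x t) s (wss u v s t).
Proof. intro Hs. destruct (C2u s t Hs) as [_ [_ [A _]]]. destruct (C2v s t Hs) as [_ [_ [B _]]].
  apply (is_derive_minus (fun x => pd1 u x t) (fun x => pd1 v x t)); apply Derive_correct; auto. Qed.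
Lemma d_wt_t s t : 0 < s -> is_derive (fun y => wt u v s y) t (wtt u v s t).
Proof. intro Hs. destruct (C2u s t Hs) as [_ [_ [_ [_ [_ [A _]]]]]].
  destruct (C2v s t Hs) as [_ [_ [_ [_ [_ [B _]]]]]].
  apply (is_derive_minus (fun y => pd2 u s y) (fun y => pd2 v s y)); apply Derive_correct; auto. Qed.

Ltac c2m A B := apply (continuity_2d_pt_minus _ _ _ _ (cont2_2d _ _ _ A) (cont2_2d _ _ _ B)).

Lemma c_w s t : 0 < s -> continuity_2d_pt (ww u v) s t.
Proof. intro Hs. destruct (C2u s t Hs) as [_ [_ [_ [_ [_ [_ [A _]]]]]]].
  destruct (C2v s t Hs) as [_ [_ [_ [_ [_ [_ [B _]]]]]]]. c2m A B. Qed.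
Lemma c_ws s t : 0 < s -> continuity_2d_pt (ws u v) s t.
Proof. intro Hs. destruct (C2u s t Hs) as [_ [_ [_ [_ [_ [_ [_ [A _]]]]]]]].
  destruct (C2v s t Hs) as [_ [_ [_ [_ [_ [_ [_ [B _]]]]]]]]. c2m A B. Qed.
Lemma c_wt s t : 0 < s -> continuity_2d_pt (wt u v) s t.
Proof. intro Hs. destruct (C2u s t Hs) as [_ [_ [_ [_ [_ [_ [_ [_ [A _]]]]]]]]].
  destruct (C2v s t Hs) as [_ [_ [_ [_ [_ [_ [_ [_ [B _]]]]]]]]]. c2m A B. Qed.
Lemma c_wss s t : 0 < s -> continuity_2d_pt (wss u v) s t.
Proof. intro Hs. destruct (C2u s t Hs) as [_ [_ [_ [_ [_ [_ [_ [_ [_ [A _]]]]]]]]]].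
  destruct (C2v s t Hs) as [_ [_ [_ [_ [_ [_ [_ [_ [_ [B _]]]]]]]]]]. c2m A B. Qed.
Lemma c_wtt s t : 0 < s -> continuity_2d_pt (wtt u v) s t.
Proof. intro Hs. destruct (C2u s t Hs) as [_ [_ [_ [_ [_ [_ [_ [_ [_ [_ [_ [_ A]]]]]]]]]]]].
  destruct (C2v s t Hs) as [_ [_ [_ [_ [_ [_ [_ [_ [_ [_ [_ [_ B]]]]]]]]]]]]. c2m A B. Qed.

Lemma pde_w s t : 0 < s ->
  Derive (PP g1 g2) s * ws u v s t + PP g1 g2 s * wss u v s t + QQ g1 g2 s * wtt u v s t = 0.
Proof. intro Hs. pose proof (pde g1 g2 u s t HE Hu Hs). pose proof (pde g1 g2 v s t HE Hv Hs).
  unfold ws, wss, wtt. lra. Qed.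

End W.


Lemma param_der (f df : R -> R -> R) a b s : 0 < s ->
 (forall x t, 0 < x -> is_derive (fun z => f z t) x (df x t)) ->
 (forall x t, 0 < x -> continuity_2d_pt f x t) ->
 (forall x t, 0 < x -> continuity_2d_pt df x t) ->
 is_derive (fun x => RInt (fun t => f x t) a b) s (RInt (fun t => df s t) a b).
Proof.
  intros Hs Hd Hf Hdf.
  rewrite <- (RInt_ext (fun t => Derive (fun z => f z t) s)).
  2:{ intros t _. apply is_derive_unique, Hd, Hs. }
  apply is_derive_RInt_param.
  - apply (filter_imp (fun t => 0 < t)); [|apply loc_pos, Hs].
    intros x Hx t _. eexists. apply Hd, Hx.
  - intros t _. apply (continuity_2d_pt_ext_loc df).
    + exists (mkposreal s Hs). intros x y Hx _. simpl in Hx.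
      symmetry. apply is_derive_unique, Hd.
      apply Rabs_lt_between in Hx. lra.
    + apply Hdf, Hs.
  - apply (filter_imp (fun t => 0 < t)); [|apply loc_pos, Hs].
    intros x Hx. apply (ex_RInt_continuous (V:=R_CompleteNormedModule)). intros z _.
    apply (cont_slice f). apply cont2_of_2d, Hf, Hx.
Qed.

Lemma per_der (f : R -> R) c p : (forall y, f (y + p) = f y) -> ex_derive f (c + p) ->
  Derive f (c + p) = Derive f c.
Proof.
  intros Hp Hd. symmetry.
  rewrite (Derive_ext f (fun y => f (y + p))) by (intro; symmetry; apply Hp).
  apply is_derive_unique.
  assert (H : is_derive (fun y => f (y + p)) c (scal 1 (Derive f (c + p)))).
  { apply (is_derive_comp f (fun y => y + p)). apply Derive_correct, Hd.
    auto_derive; auto. }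
  replace (scal 1 (Derive f (c + p))) with (Derive f (c + p)) in H. exact H. symmetry. apply (scal_one (K:=R_AbsRing)).
Qed.

Section K.
Variables (g1 g2 : R -> R) (u v : R -> R -> R) (c : R).
Hypothesis HE : complete_end_of_revolution g1 g2.
Hypothesis Hu : bdd_harmonic_on_end g1 g2 u.
Hypothesis Hv : bdd_harmonic_on_end g1 g2 v.
Ltac ctac := lazymatch goal with |- continuity_2d_pt ?f _ _ =>
  lazymatch f with
  | context [wss] => apply c_wss with (g1:=g1) (g2:=g2); auto
  | context [wtt] => apply c_wtt with (g1:=g1) (g2:=g2); auto
  | context [ws] => apply c_ws with (g1:=g1) (g2:=g2); auto
  | context [wt] => apply c_wt with (g1:=g1) (g2:=g2); auto
  | context [ww] => apply c_w with (g1:=g1) (g2:=g2); auto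
  end end.

Let d := c + 2 * PI.
Definition h1 x t := ws u v x t * ww u v x t + ww u v x t * ws u v x t.
Definition h2 x t := (wss u v x t * ww u v x t + ws u v x t * ws u v x t)
   + (ws u v x t * ws u v x t + ww u v x t * wss u v x t).
Definition FF s := RInt (fun t => ww u v s t * ww u v s t) c (c + 2 * PI).
Definition II s := RInt (fun t => h1 s t) c (c + 2 * PI).
Definition KK s := PP g1 g2 s * II s.

Lemma dFF s : 0 < s -> is_derive FF s (II s).
Proof.
  intro Hs. unfold FF, II. apply (param_der (fun x t => ww u v x t * ww u v x t) h1); auto.
  - intros x t Hx. unfold h1.
    apply (is_derive_mult (fun z => ww u v z t) (fun z => ww u v z t)).
    apply d_w_s with (g1:=g1) (g2:=g2); auto. apply d_w_s with (g1:=g1) (g2:=g2); auto. intros; apply Rmult_comm.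
  - intros x t Hx. apply continuity_2d_pt_mult; apply c_w with (g1:=g1) (g2:=g2); auto.
  - intros x t Hx. unfold h1. apply continuity_2d_pt_plus; apply continuity_2d_pt_mult;
    ctac.
Qed.

Lemma dII s : 0 < s -> is_derive II s (RInt (fun t => h2 s t) c (c + 2 * PI)).
Proof.
  intro Hs. unfold II. apply (param_der h1 h2); auto.
  - intros x t Hx. unfold h1, h2.
    apply (is_derive_plus (fun z => ws u v z t * ww u v z t) (fun z => ww u v z t * ws u v z t)).
    + apply (is_derive_mult (fun z => ws u v z t) (fun z => ww u v z t)).
      apply d_ws_s with (g1:=g1) (g2:=g2); auto. apply d_w_s with (g1:=g1) (g2:=g2); auto. intros; apply Rmult_comm.
    + apply (is_derive_mult (fun z => ww u v z t) (fun z => ws u v z t)).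
      apply d_w_s with (g1:=g1) (g2:=g2); auto. apply d_ws_s with (g1:=g1) (g2:=g2); auto. intros; apply Rmult_comm.
  - intros x t Hx. unfold h1. apply continuity_2d_pt_plus; apply continuity_2d_pt_mult;
    ctac.
  - intros x t Hx. unfold h2. repeat apply continuity_2d_pt_plus; apply continuity_2d_pt_mult;
    ctac.
Qed.

Lemma gpos s : 0 <= s -> 0 < g1 s /\ 0 < g2 s /\ 0 < NN g1 g2 s.
Proof. intro H. destruct HE as [_ [_ [HN [H1 [H2 _]]]]]. repeat split; auto. apply HN, H. Qed.

Lemma PP_pos s : 0 <= s -> 0 < PP g1 g2 s.
Proof. intro H. destruct (gpos s H) as [A [B C]]. unfold PP.
  apply Rdiv_lt_0_compat; auto. apply sqrt_lt_R0; auto. Qed.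
Lemma QQ_pos s : 0 <= s -> 0 < QQ g1 g2 s.
Proof. intro H. destruct (gpos s H) as [A [B C]]. unfold QQ.
  apply Rdiv_lt_0_compat; auto. apply sqrt_lt_R0; auto. Qed.

Lemma dKK s : 0 < s -> is_derive KK s (Derive (PP g1 g2) s * II s
    + PP g1 g2 s * RInt (fun t => h2 s t) c (c + 2 * PI)).
Proof.
  intro Hs. unfold KK. apply (is_derive_mult (PP g1 g2) II).
  apply Derive_correct. destruct HE as [S1 [S2 _]]. apply PP_der; auto.
  apply gpos; lra. apply dII; auto. intros; apply Rmult_comm.
Qed.

Lemma exr (f : R -> R -> R) s a b : (forall t, continuity_2d_pt f s t) ->
  ex_RInt (fun t => f s t) a b.
Proof. intro H. apply (ex_RInt_continuous (V:=R_CompleteNormedModule)). intros z _.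
  apply (cont_slice f). apply cont2_of_2d, H. Qed.

Lemma per_w s t : 0 <= s -> ww u v s (t + 2 * PI) = ww u v s t.
Proof. intro Hs. destruct Hu as [A _]. destruct Hv as [B _]. unfold ww.
  rewrite A, B; auto. Qed.
Lemma per_pd2 (z : R -> R -> R) s t : bdd_harmonic_on_end g1 g2 z -> 0 < s ->
  pd2 z s (t + 2 * PI) = pd2 z s t.
Proof. intros Hz Hs. destruct Hz as [A [_ [_ D]]]. unfold pd2. apply per_der.
  intro y. apply A; lra. apply (D s (t + 2 * PI) Hs). Qed.
Lemma per_wt s t : 0 < s -> wt u v s (t + 2 * PI) = wt u v s t.
Proof. intro Hs. unfold wt. rewrite (per_pd2 u), (per_pd2 v); auto. Qed.

Lemma HZ s : 0 < s -> is_RInt (fun t => wt u v s t * wt u v s t + ww u v s t * wtt u v s t)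
   c (c + 2 * PI) 0.
Proof.
  intro Hs.
  assert (Hm : minus (ww u v s (c + 2 * PI) * wt u v s (c + 2 * PI)) (ww u v s c * wt u v s c) = 0).
  { rewrite per_w, per_wt; try lra. unfold minus, plus, opp; simpl; ring. }
  rewrite <- Hm.
  apply (is_RInt_derive (fun t => ww u v s t * wt u v s t)
     (fun t => wt u v s t * wt u v s t + ww u v s t * wtt u v s t) c (c + 2 * PI)).
  - intros x _. apply (is_derive_mult (fun z => ww u v s z) (fun z => wt u v s z)).
    apply d_w_t with (g1:=g1) (g2:=g2); auto. apply d_wt_t with (g1:=g1) (g2:=g2); auto. intros; apply Rmult_comm.
  - intros x _. apply (cont_slice (fun a b => wt u v a b * wt u v a b + ww u v a b * wtt u v a b)).
    apply cont2_of_2d. apply continuity_2d_pt_plus; apply continuity_2d_pt_mult; ctac.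
Qed.

Lemma Kd_nonneg s : 0 < s -> 0 <= Derive (PP g1 g2) s * II s
    + PP g1 g2 s * RInt (fun t => h2 s t) c (c + 2 * PI).
Proof.
  intro Hs.
  set (P' := Derive (PP g1 g2) s). set (P := PP g1 g2 s). set (Q := QQ g1 g2 s).
  assert (HP : 0 < P) by (apply PP_pos; lra).
  assert (HQ : 0 < Q) by (apply QQ_pos; lra).
  set (G := fun t => 2 * P * (ws u v s t * ws u v s t) + 2 * Q * (wt u v s t * wt u v s t)).
  assert (HI1 : is_RInt (fun t => h1 s t) c (c + 2 * PI) (II s)).
  { apply (RInt_correct (V:=R_CompleteNormedModule)). apply exr. intro t. unfold h1.
    apply continuity_2d_pt_plus; apply continuity_2d_pt_mult; ctac. }
  assert (HI2 : is_RInt (fun t => h2 s t) c (c + 2 * PI) (RInt (fun t => h2 s t) c (c + 2 * PI))).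
  { apply (RInt_correct (V:=R_CompleteNormedModule)). apply exr. intro t. unfold h2.
    repeat apply continuity_2d_pt_plus; apply continuity_2d_pt_mult; ctac. }
  assert (HG : is_RInt G c (c + 2 * PI) (RInt G c (c + 2 * PI))).
  { apply (RInt_correct (V:=R_CompleteNormedModule)).
    apply (exr (fun a b => 2 * P * (ws u v a b * ws u v a b) + 2 * Q * (wt u v a b * wt u v a b))).
    intro t. apply continuity_2d_pt_plus; apply continuity_2d_pt_mult;
    try apply continuity_2d_pt_const; apply continuity_2d_pt_mult; ctac. }
  pose proof (HZ s Hs) as HZ0.
  assert (C1 := is_RInt_plus _ _ _ _ _ _ (is_RInt_scal _ _ _ P' _ HI1) (is_RInt_scal _ _ _ P _ HI2)).
  assert (C2 := is_RInt_plus _ _ _ _ _ _ HG (is_RInt_scal _ _ _ (-2 * Q) _ HZ0)).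
  assert (C2' : is_RInt (fun y => plus (scal P' (h1 s y)) (scal P (h2 s y))) c (c + 2 * PI)
     (plus (RInt G c (c + 2 * PI)) (scal (-2 * Q) 0))).
  { apply (is_RInt_ext _ _ _ _ _ ) with (2 := C2). intros t _.
    pose proof (pde_w g1 g2 u v HE Hu Hv s t Hs) as E.
    unfold G, h1, h2, plus, scal; simpl; unfold mult; simpl. fold P P' Q in E.
    apply Rminus_diag_uniq.
    transitivity (-2 * ww u v s t * (P' * ws u v s t + P * wss u v s t + Q * wtt u v s t)).
    ring. rewrite E. ring. }
  assert (C3 : plus (scal P' (II s)) (scal P (RInt (fun t => h2 s t) c (c + 2 * PI)))
    = plus (RInt G c (c + 2 * PI)) (scal (-2 * Q) 0)).
  { transitivity (RInt (fun y => plus (scal P' (h1 s y)) (scal P (h2 s y))) c (c + 2 * PI)).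
    symmetry; apply (is_RInt_unique (V:=R_CompleteNormedModule)); exact C1.
    apply (is_RInt_unique (V:=R_CompleteNormedModule)). exact C2'. }
  clear C2'. rename C3 into C2'.
  unfold plus, scal in C2'; simpl in C2'; unfold mult in C2'; simpl in C2'.
  rewrite C2'. rewrite Rmult_0_r, Rplus_0_r.
  apply RInt_ge_0. pose proof PI_RGT_0; lra. eexists; exact HG.
  intros t _. unfold G.
  apply Rplus_le_le_0_compat; apply Rmult_le_pos; try lra; apply Rle_0_sqr.
Qed.

End K.


Lemma map_cont x y : continuous (fun p : R * R => (Rabs (fst p), snd p)) (x, y).
Proof.
  apply (continuous_comp_2 (fun p : R * R => Rabs (fst p)) (fun p : R * R => snd p) (fun a b => (a, b))).
  - apply (continuous_comp (fun p : R * R => fst p) Rabs). apply continuous_fst. apply continuous_Rabs.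
  - apply continuous_snd.
  - apply (continuous_ext (fun q => q)). intros [a b]; reflexivity. apply continuous_id.
Qed.

Lemma abs_cont (z : R -> R -> R) x y :
 (forall s t, 0 <= s -> filterlim (fun p : R * R => z (fst p) (snd p))
     (within (fun p : R * R => 0 <= fst p) (locally (s, t))) (locally (z s t))) ->
 continuity_2d_pt (fun a b => z (Rabs a) b) x y.
Proof.
  intro H. apply continuity_2d_pt_filterlim.
  apply (filterlim_comp _ _ _ (fun p : R * R => (Rabs (fst p), snd p)) (fun q : R * R => z (fst q) (snd q))
     _ (within (fun p : R * R => 0 <= fst p) (locally (Rabs x, y)))).
  - intros P HP. unfold within in HP.
    pose proof (map_cont x y _ HP) as H2. unfold filtermap in *.
    apply (filter_imp _ _ (fun p H3 => H3 (Rabs_pos _))) in H2. exact H2.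
  - apply H, Rabs_pos.
Qed.

Section F.
Variables (g1 g2 : R -> R) (u v : R -> R -> R) (c : R).
Hypothesis HE : complete_end_of_revolution g1 g2.
Hypothesis Hu : bdd_harmonic_on_end g1 g2 u.
Hypothesis Hv : bdd_harmonic_on_end g1 g2 v.
Hypothesis Hb : forall t, u 0 t = v 0 t.

Lemma ex_ww2 s a b : 0 < s -> ex_RInt (fun t => ww u v s t * ww u v s t) a b.
Proof. intro Hs. apply (exr (fun x t => ww u v x t * ww u v x t)). intro t.
  apply continuity_2d_pt_mult; apply c_w with (g1:=g1) (g2:=g2); auto. Qed.

Lemma FF_nonneg s : 0 < s -> 0 <= FF u v c s.
Proof. intro Hs. unfold FF. apply RInt_ge_0. pose proof PI_RGT_0; lra.
  apply ex_ww2; auto. intros; apply Rle_0_sqr. Qed.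

Lemma FF_bound : exists B, forall s, 0 < s -> FF u v c s <= B.
Proof.
  destruct Hu as [_ [[Mu HMu] _]]. destruct Hv as [_ [[Mv HMv] _]].
  exists (2 * PI * ((Mu + Mv) * (Mu + Mv))). intros s Hs. unfold FF.
  replace (2 * PI * ((Mu + Mv) * (Mu + Mv))) with (RInt (fun _ => (Mu + Mv) * (Mu + Mv)) c (c + 2 * PI)).
  2:{ rewrite (RInt_const (V:=R_CompleteNormedModule)). unfold scal; simpl; unfold mult; simpl. ring. }
  apply RInt_le. pose proof PI_RGT_0; lra. apply ex_ww2; auto.
  apply (ex_RInt_const (V:=R_CompleteNormedModule)).
  intros t _. specialize (HMu s t ltac:(lra)). specialize (HMv s t ltac:(lra)).
  unfold ww. assert (Hw : Rabs (u s t - v s t) <= Mu + Mv).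
  { eapply Rle_trans. apply Rabs_triang. rewrite Rabs_Ropp. lra. }
  apply Rabs_le_between in Hw. nra.
Qed.
Lemma cw_abs x y : continuity_2d_pt (fun a b => ww u v (Rabs a) b) x y.
Proof.
  destruct Hu as [_ [_ [Hu3 _]]]. destruct Hv as [_ [_ [Hv3 _]]].
  unfold ww. apply (continuity_2d_pt_minus (fun a b => u (Rabs a) b) (fun a b => v (Rabs a) b));
  apply abs_cont; auto.
Qed.

Lemma FF_small eps : 0 < eps -> exists del, 0 < del /\ forall s, 0 < s < del -> FF u v c s <= eps.
Proof.
  intro He. assert (HPI := PI_RGT_0).
  set (e := sqrt (eps / (2 * PI))).
  assert (He1 : 0 < e) by (apply sqrt_lt_R0; apply Rdiv_lt_0_compat; lra).
  assert (He2 : e * e = eps / (2 * PI)) by (apply sqrt_sqrt; apply Rlt_le, Rdiv_lt_0_compat; lra).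
  destruct (uniform_continuity_2d (fun a b => ww u v (Rabs a) b) (-1) 1 c (c + 2 * PI)
    (fun x y _ _ => cw_abs x y) (mkposreal e He1)) as [dl Hdl].
  exists (Rmin dl 1). split. apply Rmin_pos; [apply cond_pos|lra].
  intros s [Hs1 Hs2]. pose proof (Rmin_l dl 1). pose proof (Rmin_r dl 1).
  unfold FF. replace eps with (RInt (fun _ => e * e) c (c + 2 * PI)).
  2:{ rewrite (RInt_const (V:=R_CompleteNormedModule)). unfold scal; simpl; unfold mult; simpl.
      rewrite He2. field. lra. }
  apply RInt_le. lra. apply ex_ww2; auto.
  apply (ex_RInt_const (V:=R_CompleteNormedModule)).
  intros t Ht. specialize (Hdl 0 t s t). simpl in Hdl.
  rewrite Rabs_R0, (Rabs_pos_eq s) in Hdl by lra.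
  assert (Hz0 : ww u v 0 t = 0) by (unfold ww; rewrite Hb; ring).
  rewrite Hz0, Rminus_0_r, Rminus_0_r in Hdl.
  assert (Hw : Rabs (ww u v s t) < e).
  { apply Hdl; try lra. rewrite Rabs_pos_eq; lra. rewrite Rminus_eq_0, Rabs_R0. apply cond_pos. }
  apply Rabs_lt_between in Hw. nra.
Qed.

Lemma FF_zero s : 0 < s -> FF u v c s = 0 -> ww u v s c = 0.
Proof.
  intros Hs HF. assert (HPI := PI_RGT_0).
  destruct (Req_dec (ww u v s c) 0) as [E|E]; auto. exfalso.
  set (f := fun t => ww u v s t * ww u v s t).
  assert (Hfc : 0 < f c) by (unfold f; nra).
  assert (Hcont : forall t, continuous f t).
  { intro t. apply (cont_slice (fun a b => ww u v a b * ww u v a b)). apply cont2_of_2d.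
    apply continuity_2d_pt_mult; apply c_w with (g1:=g1) (g2:=g2); auto. }
  assert (Hl := Hcont c (ball (f c) (mkposreal (f c / 2) ltac:(lra))) (locally_ball _ _)).
  destruct Hl as [dl Hdl].
  set (dd := Rmin (dl / 2) PI).
  assert (Hdd : 0 < dd) by (apply Rmin_pos; [pose proof (cond_pos dl)|]; lra).
  assert (Hdd1 : dd <= dl / 2) by apply Rmin_l. assert (Hdd2 : dd <= PI) by apply Rmin_r.
  assert (Hpos : forall t, c <= t <= c + dd -> 0 < f t).
  { intros t Ht. assert (B : ball c dl t).
    { change (Rabs (t - c) < dl). rewrite Rabs_pos_eq by lra. pose proof (cond_pos dl). lra. }
    specialize (Hdl t B). change (Rabs (f t - f c) < f c / 2) in Hdl.
    apply Rabs_lt_between in Hdl. lra. }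
  assert (I1 : 0 < RInt f c (c + dd)).
  { apply RInt_gt_0. lra. intros; apply Hpos; lra. intros; apply Hcont. }
  assert (I2 : 0 <= RInt f (c + dd) (c + 2 * PI)).
  { apply RInt_ge_0. lra. apply ex_ww2; auto. intros; unfold f; apply Rle_0_sqr. }
  assert (Ch := RInt_Chasles f c (c + dd) (c + 2 * PI) (ex_ww2 s _ _ Hs) (ex_ww2 s _ _ Hs)).
  unfold FF in HF. fold f in HF. rewrite HF in Ch. unfold plus in Ch; simpl in Ch. lra.
Qed.

End F.


Lemma mono (f df : R -> R) a b : a <= b ->
  (forall x, a <= x <= b -> is_derive f x (df x)) ->
  (forall x, a <= x <= b -> 0 <= df x) -> f a <= f b.
Proof.
  intros Hab Hd Hp.
  destruct (MVT_gen f a b df) as [c [Hc E]].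
  - intros x Hx. rewrite Rmin_left, Rmax_right in Hx by lra. apply Hd; lra.
  - intros x Hx. rewrite Rmin_left, Rmax_right in Hx by lra.
    apply continuity_pt_filterlim. apply (ex_derive_continuous f x). eexists; apply Hd; lra.
  - rewrite Rmin_left, Rmax_right in Hc by lra.
    assert (0 <= df c) by (apply Hp; lra). nra.
Qed.

Lemma oned (F I P Kd Hf hd : R -> R) (B : R) :
  (forall s, 0 < s -> is_derive F s (I s)) ->
  (forall s, 0 < s -> is_derive (fun x => P x * I x) s (Kd s)) ->
  (forall s, 0 < s -> 0 <= Kd s) ->
  (forall s, 0 < s -> 0 < P s) ->
  (forall s, 0 < s -> is_derive Hf s (hd s)) ->
  (forall s, 0 < s -> 0 <= hd s <= / P s) ->
  (forall M, exists s, 0 < s /\ M < Hf s) ->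
  (forall s, 0 < s -> 0 <= F s <= B) ->
  (forall eps, 0 < eps -> exists del, 0 < del /\ forall s, 0 < s < del -> F s <= eps) ->
  forall s, 0 < s -> F s = 0.
Proof.
  intros HF HK HKd HP HH Hhd Hunb HB Hsm.
  assert (Kmono : forall a b, 0 < a <= b -> P a * I a <= P b * I b).
  { intros a b Hab. apply (mono (fun x => P x * I x) Kd); try lra.
    intros; apply HK; lra. intros; apply HKd; lra. }
  assert (Hmon : forall a b, 0 < a <= b -> Hf a <= Hf b).
  { intros a b Hab. apply (mono Hf hd); try lra.
    intros; apply HH; lra. intros; apply Hhd; lra. }
  assert (Kneg : forall s, 0 < s -> P s * I s <= 0).
  { intros s0 Hs0. destruct (Rle_lt_dec (P s0 * I s0) 0) as [Hk|Hk]; auto. exfalso.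
    set (k := P s0 * I s0) in *.
    assert (G : forall x, s0 <= x -> F s0 - k * Hf s0 <= F x - k * Hf x).
    { intros x Hx. apply (mono (fun y => F y - k * Hf y) (fun y => I y - k * hd y)); auto.
      - intros y Hy. apply (is_derive_minus F (fun y => k * Hf y)). apply HF; lra.
        apply (is_derive_scal Hf). apply HH; lra.
      - intros y Hy. assert (Py := HP y ltac:(lra)).
        assert (k <= P y * I y) by (apply Kmono; lra).
        destruct (Hhd y ltac:(lra)) as [h1 h2].
        assert (I y >= k / P y).
        { apply Rle_ge. apply (Rmult_le_reg_l (P y)); auto. replace (P y * (k / P y)) with k by (field; lra). lra. }
        assert (k * hd y <= k / P y).
        { unfold Rdiv. apply Rmult_le_compat_l. lra. exact h2. }
        lra. }
    destruct (HB s0 Hs0) as [F0 F0B].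
    destruct (Hunb (Hf s0 + (B - F s0) / k + 1)) as [x [Hx Hfx]].
    assert (Hk' : 0 <= (B - F s0) / k) by (apply Rdiv_le_0_compat; lra).
    assert (Hxs : s0 <= x).
    { destruct (Rle_lt_dec s0 x) as [?|Hlt]; auto.
      assert (Hf x <= Hf s0) by (apply Hmon; lra). lra. }
    specialize (G x Hxs). destruct (HB x Hx) as [_ Fx].
    assert (k * ((B - F s0) / k + 1) < k * (Hf x - Hf s0)) by (apply Rmult_lt_compat_l; lra).
    replace (k * ((B - F s0) / k + 1)) with (B - F s0 + k) in H by (field; lra).
    lra. }
  assert (Fdec : forall a b, 0 < a <= b -> F b <= F a).
  { intros a b Hab.
    assert (E : - F a <= - F b).
    { apply (mono (fun y => - F y) (fun y => - I y)); try lra.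
      intros y Hy. apply (is_derive_opp F). apply HF; lra.
      intros y Hy. assert (P y * I y <= 0) by (apply Kneg; lra).
      assert (0 < P y) by (apply HP; lra).
      assert (I y <= 0). { destruct (Rle_lt_dec (I y) 0); auto. nra. } lra. }
    lra. }
  intros s Hs. destruct (HB s Hs) as [Fs _].
  destruct (Rle_lt_dec (F s) 0) as [Hle|Hlt]; [lra|exfalso].
  destruct (Hsm (F s / 2) ltac:(lra)) as [del [Hdel Hd]].
  set (x := Rmin s del / 2).
  assert (0 < Rmin s del) by (apply Rmin_pos; lra).
  pose proof (Rmin_l s del). pose proof (Rmin_r s del).
  assert (F s <= F x) by (apply Fdec; unfold x; lra).
  assert (F x <= F s / 2) by (apply Hd; unfold x; lra).
  lra.
Qed.


Lemma isd (f : R -> R) x l l' : is_derive f x l -> l = l' -> is_derive f x l'.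
Proof. intros H E; subst; auto. Qed.

Section G.
Variables (g1 g2 : R -> R) (cc : R).
Hypothesis HE : complete_end_of_revolution g1 g2.
Hypothesis Hcc : 0 < cc.
Hypothesis Hg2 : forall s, 0 <= s -> cc <= g2 s.

Lemma S1 : smooth g1. Proof. apply HE. Qed.
Lemma S2 : smooth g2. Proof. apply HE. Qed.

Lemma cNN x : continuous (fun y => sqrt (NN g1 g2 y)) x.
Proof.
  apply continuous_sqrt_comp.
  unfold NN.
  apply (continuous_plus (K:=R_AbsRing) (V:=R_NormedModule) (fun y => Derive g1 y ^ 2) (fun y => Derive g2 y ^ 2)).
  - apply (continuous_ext (fun y => mult (K:=R_AbsRing) (Derive g1 y) (Derive g1 y))).
    intro; unfold mult; simpl; ring.
    apply continuous_mult; apply smooth_dc, S1.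
  - apply (continuous_ext (fun y => mult (K:=R_AbsRing) (Derive g2 y) (Derive g2 y))).
    intro; unfold mult; simpl; ring.
    apply continuous_mult; apply smooth_dc, S2.
Qed.

Definition Lf s := RInt (fun y => sqrt (NN g1 g2 y)) 0 s.

Lemma exL a b : ex_RInt (fun y => sqrt (NN g1 g2 y)) a b.
Proof. apply (ex_RInt_continuous (V:=R_CompleteNormedModule)). intros; apply cNN. Qed.

Lemma dL s : is_derive Lf s (sqrt (NN g1 g2 s)).
Proof.
  apply (is_derive_RInt (V:=R_CompleteNormedModule) (fun y => sqrt (NN g1 g2 y)) Lf 0 s).
  - apply filter_forall. intro b. apply (RInt_correct (V:=R_CompleteNormedModule)). apply exL.
  - apply cNN.
Qed.

Lemma L0 : Lf 0 = 0.
Proof. unfold Lf. apply (RInt_point (V:=R_CompleteNormedModule)). Qed.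

Lemma Lpos s : 0 <= s -> 0 <= Lf s.
Proof. intro Hs. unfold Lf. apply RInt_ge_0; auto. apply exL. intros; apply sqrt_pos. Qed.

Lemma g1_le s : 0 <= s -> g1 s <= g1 0 + Lf s.
Proof.
  intro Hs.
  assert (H := mono (fun x => g1 0 + Lf x - g1 x) (fun x => sqrt (NN g1 g2 x) - Derive g1 x) 0 s Hs).
  simpl in H. rewrite L0 in H. cut (0 <= g1 0 + Lf s - g1 s). lra.
  replace 0 with (g1 0 + 0 - g1 0) at 1 by ring. apply H.
  - intros x _. apply isd with (plus (plus zero (sqrt (NN g1 g2 x))) (opp (Derive g1 x))).
    apply (is_derive_minus (fun x => g1 0 + Lf x) g1).
    apply (is_derive_plus (fun _ => g1 0) Lf). apply (is_derive_const (K:=R_AbsRing) (V:=R_NormedModule)). apply dL.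
    apply Derive_correct, smooth_d, S1.
    unfold plus, opp, zero; simpl; ring.
  - intros x _. cut (Derive g1 x <= sqrt (NN g1 g2 x)). lra.
    eapply Rle_trans. apply Rle_abs. rewrite <- sqrt_Rsqr_abs. apply sqrt_le_1_alt.
    unfold NN, Rsqr. pose proof (pow2_ge_0 (Derive g2 x)). simpl. nra.
Qed.

Lemma g1pos s : 0 <= s -> 0 < g1 s.
Proof. apply HE. Qed.
Lemma g2pos s : 0 <= s -> 0 < g2 s.
Proof. apply HE. Qed.
Lemma NNpos s : 0 <= s -> 0 < NN g1 g2 s.
Proof. intro; apply HE; auto. Qed.

Lemma L_unb M : exists T, 0 < T /\ M < Lf T.
Proof.
  destruct HE as [_ [_ [_ [_ [_ Hinf]]]]].
  destruct (Hinf (Rmax M 0 / cc)) as [T [HT HI]].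
  change (Rmax M 0 / cc < RInt (fun s => sqrt (NN g1 g2 s) / g2 s) 0 T) in HI.
  assert (Hex : ex_RInt (fun s => sqrt (NN g1 g2 s) / g2 s) 0 T).
  { apply (ex_RInt_continuous (V:=R_CompleteNormedModule)). intros z Hz.
    rewrite Rmin_left, Rmax_right in Hz by lra.
    apply (continuous_mult (K:=R_AbsRing) (fun y => sqrt (NN g1 g2 y)) (fun y => / g2 y)).
    apply cNN. apply continuous_Rinv_comp. apply smooth_c, S2.
    apply Rgt_not_eq, g2pos; lra. }
  assert (Hle : cc * RInt (fun s => sqrt (NN g1 g2 s) / g2 s) 0 T <= Lf T).
  { unfold Lf.
    replace (cc * RInt (fun s => sqrt (NN g1 g2 s) / g2 s) 0 T) with
      (RInt (fun s => cc * (sqrt (NN g1 g2 s) / g2 s)) 0 T).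
    2:{ apply (RInt_scal (V:=R_CompleteNormedModule) (fun s => sqrt (NN g1 g2 s) / g2 s)); auto. }
    apply RInt_le; auto.
    apply (ex_RInt_scal (V:=R_CompleteNormedModule) (fun s => sqrt (NN g1 g2 s) / g2 s)); auto.
    apply exL.
    intros x Hx. assert (G2 := Hg2 x ltac:(lra)). assert (G2' := g2pos x ltac:(lra)).
    pose proof (sqrt_pos (NN g1 g2 x)).
    replace (cc * (sqrt (NN g1 g2 x) / g2 x)) with (sqrt (NN g1 g2 x) * (cc / g2 x)) by (field; lra).
    rewrite <- (Rmult_1_r (sqrt (NN g1 g2 x))) at 2. apply Rmult_le_compat_l; auto.
    apply (Rmult_le_reg_r (g2 x)); auto. unfold Rdiv. rewrite Rmult_assoc, Rinv_l by lra. lra. }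
  assert (HM : Rmax M 0 < cc * RInt (fun s => sqrt (NN g1 g2 s) / g2 s) 0 T).
  { apply (Rmult_lt_compat_l cc) in HI; auto.
    replace (cc * (Rmax M 0 / cc)) with (Rmax M 0) in HI by (field; lra). exact HI. }
  pose proof (Rmax_l M 0). pose proof (Rmax_r M 0).
  exists T. split; [|lra].
  destruct (Req_dec T 0) as [E|E]; [|lra]. subst T. rewrite L0 in Hle. lra.
Qed.

Definition Hf s := ln (g1 0 + Lf s).
Definition hd s := sqrt (NN g1 g2 s) / (g1 0 + Lf s).

Lemma apos s : 0 <= s -> 0 < g1 0 + Lf s.
Proof. intro Hs. pose proof (Lpos s Hs). pose proof (g1pos 0 ltac:(lra)). lra. Qed.

Lemma dHf s : 0 <= s -> is_derive Hf s (hd s).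
Proof.
  intro Hs. unfold Hf, hd. apply isd with (scal (sqrt (NN g1 g2 s)) (/ (g1 0 + Lf s))).
  apply (is_derive_comp ln (fun x => g1 0 + Lf x)).
  apply is_derive_ln, apos; auto.
  apply isd with (plus zero (sqrt (NN g1 g2 s))).
  apply (is_derive_plus (fun _ => g1 0) Lf). apply (is_derive_const (K:=R_AbsRing) (V:=R_NormedModule)). apply dL.
  unfold plus, zero; simpl; ring.
  unfold scal; simpl; unfold mult; simpl. unfold Rdiv; ring.
Qed.

Lemma hd_bound s : 0 <= s -> 0 <= hd s <= / PP g1 g2 s.
Proof.
  intro Hs. unfold hd, PP. pose proof (apos s Hs). pose proof (g1pos s Hs).
  pose proof (g1_le s Hs). pose proof (NNpos s Hs).
  assert (0 < sqrt (NN g1 g2 s)) by (apply sqrt_lt_R0; auto).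
  split. apply Rdiv_le_0_compat; lra.
  rewrite Rinv_div. unfold Rdiv. apply Rmult_le_compat_l. lra.
  apply Rinv_le_contravar; lra.
Qed.

Lemma Hf_unb M : exists s, 0 < s /\ M < Hf s.
Proof.
  destruct (L_unb (exp M)) as [T [HT HL]]. exists T. split; auto.
  unfold Hf. rewrite <- (ln_exp M) at 1. apply ln_increasing. apply exp_pos.
  pose proof (g1pos 0 ltac:(lra)). lra.
Qed.
End G.


Lemma parab g1 g2 cc : complete_end_of_revolution g1 g2 -> 0 < cc ->
  (forall s, 0 <= s -> cc <= g2 s) -> parabolic_end g1 g2.
Proof.
  intros HE Hcc Hg2 u v Hu Hv Hb s th Hs.
  destruct (Req_dec s 0) as [E|E]. subst s; apply Hb.
  assert (Hs' : 0 < s) by lra.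
  assert (W : ww u v s th = 0).
  { apply (FF_zero g1 g2 u v th Hu Hv s Hs').
    destruct (FF_bound g1 g2 u v th Hu Hv) as [B HB].
    apply (oned (FF u v th) (II u v th) (PP g1 g2)
      (fun s => Derive (PP g1 g2) s * II u v th s + PP g1 g2 s * RInt (fun t => h2 u v s t) th (th + 2 * PI))
      (Hf g1 g2) (hd g1 g2) B); auto.
    - intros x Hx. apply (dFF g1 g2 u v th Hu Hv x Hx).
    - intros x Hx. apply (dKK g1 g2 u v th HE Hu Hv x Hx).
    - intros x Hx. apply (Kd_nonneg g1 g2 u v th HE Hu Hv x Hx).
    - intros x Hx. apply PP_pos; auto; lra.
    - intros x Hx. apply dHf; auto; lra.
    - intros x Hx. apply hd_bound; auto; lra.
    - intro M. apply (Hf_unb g1 g2 cc HE Hcc Hg2 M).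
    - intros x Hx. split. apply (FF_nonneg g1 g2 u v th Hu Hv x Hx). apply HB, Hx.
    - intros eps He. apply (FF_small g1 g2 u v th Hu Hv Hb eps He). }
  unfold ww in W. lra.
Qed.

Theorem corollaryE (g1 g2 : R -> R) :
  complete_end_of_revolution g1 g2 ->
  ~ parabolic_end g1 g2 ->
  Glb_Rbar (fun y => exists p, end_set g1 g2 p /\ y = x3 p) = Finite 0.
Proof.
  intros HE HNP.
  set (S := fun y => exists p, end_set g1 g2 p /\ y = x3 p).
  assert (Mem : forall s, 0 <= s -> S (g2 s)).
  { intros s Hs. exists (Xrev g1 g2 s 0). split; [|reflexivity].
    exists s, 0. repeat split; auto; try lra. pose proof PI_RGT_0; lra. }
  assert (Inv : forall y, S y -> exists s, 0 <= s /\ y = g2 s).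
  { intros y [p [[s [th [Hs [_ Hp]]]] Hy]]. exists s. split; auto. subst. reflexivity. }
  destruct (Glb_Rbar_correct S) as [Hlb Hglb].
  assert (H0 : Rbar_le (Finite 0) (Glb_Rbar S)).
  { apply Hglb. intros y Hy. destruct (Inv y Hy) as [s [Hs ->]]. simpl.
    apply Rlt_le. destruct HE as [_ [_ [_ [_ [H2 _]]]]]. apply H2, Hs. }
  assert (H1 := Hlb _ (Mem 0 (Rle_refl 0))).
  fold S. destruct (Glb_Rbar S) as [r| |]; simpl in H0, H1; try contradiction.
  f_equal. destruct (Req_dec r 0) as [E|E]; auto. exfalso. apply HNP.
  apply (parab g1 g2 r HE); [lra|].
  intros s Hs. specialize (Hlb _ (Mem s Hs)). exact Hlb.
Qed.
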